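(* In the epoch setting described in the context, for each $i\in[\rho]$ and each $I\in\mathcal{I}$, there exists an agent in $A^{(i)}$ that visits every state of $I$ during the roundabout process of the $i$-th epoch (i.e., whose set of visited states after the $t$ steps of that process contains $I$).
   Context: Let $n\ge 2$ and $k\ge1$, $\Delta$ be natural numbers, $\mathcal{G}=\langle G_1,\dots,G_L\rangle$ a temporal graph (sequence of graphs on a common $n$-element vertex set $V$), and $T$ a spanning tree of its underlying graph (the union of the snapshots). A snapshot is $k$-edge-deficient w.r.t. $T$ if it contains all but at most $k$ edges of $T$. Let $N=2(n-1)$, fix a DFS tour of $T$ from a root $r$ traversing each edge twice, with cyclic vertex sequence $(v_1,\dots,v_{N+1})$, $v_{N+1}=v_1=r$, tour edges $e_q=\{v_q,v_{q+1}\}$. Circular intervals: $[\![i,j]\!]=\{i,\dots,j\}$ if $i\le j$, $\{i,\dots,N,1,\dots,j\}$ if $i>j$; $[\![i,j[\![=[\![i,j]\!]\setminus\{j\}$. Roundabout process on a sequence $H_1,\dots,H_t$ of graphs: agents $a_1,\dots,a_N$, $s_i(0)=i$; at step $\tau$, if $s_i(\tau-1)=q$ then $s_i(\tau)=(q\bmod N)+1$ if $e_q\in E(H_\tau)$, else $q$; visited states $D_i(\tau)=[\![i,s_i(\tau)]\!]$, $D_i(0)=\{i\}$; active sets $A(0)=$ all agents, and $A(\tau)$ is obtained from $A(\tau-1)$ by repeatedly removing an arbitrary agent $a_i$ with $D_i(\tau)\subseteq\bigcup D_j(\tau)$ over the other current agents, until none remains. Let $t=\lfloor N/(2k)\rfloor$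 and $\rho=\lceil 18k\ln(6k)\rceil$. Assume an initial part of $[L]$ is partitioned into $\rho$ consecutive intervals (epochs), each containing at least $\Delta+t$ snapshots that are $k$-edge-deficient w.r.t. $T$; each epoch's first $\Delta$ time steps form its repositioning part, and the rest (containing at least $t$ such snapshots) is its roundabout part. In epoch $i$, run the roundabout process for $t$ steps on the first $t$ $k$-edge-deficient snapshots of its roundabout part, let $A^{(i)}$ be the active agents after step $t$ and $S^{(i)}$ their initial states. Let $\bigcup_{i\in[\rho]}S^{(i)}=\{m_1<\dots<m_d\}$, $I_j=[\![m_j,m_{j+1}[\![$ for $j\in[d-1]$, $I_d=[\![m_d,m_1[\![$, and $\mathcal{I}=\{I_1,\dots,I_d\}$. *)

(* Defs.v *)
From Stdlib Require Rdefinitions Raxioms Rpower.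
From HB Require Import structures.
From mathcomp Require Import all_boot.

Set Implicit Arguments.
Unset Strict Implicit.
Unset Printing Implicit Defensive.

(* rho = ceil(18 k ln(6k)), stated as the defining property of the ceiling. *)
Definition is_rho (k rho : nat) : Prop :=
  let x := Rdefinitions.Rmult (Rdefinitions.Rmult (Raxioms.INR 18) (Raxioms.INR k))
             (Rpower.ln (Rdefinitions.Rmult (Raxioms.INR 6) (Raxioms.INR k))) in
  Rdefinitions.Rlt (Rdefinitions.Rminus (Raxioms.INR rho) (Raxioms.INR 1)) x /\
  Rdefinitions.Rle x (Raxioms.INR rho).

(* Circular intervals on the states {1,...,N}. *)
Definition cint (N i j : nat) : pred nat := fun x =>
  (1 <= x <= N) && (if i <= j then (i <= x <= j) else (i <= x) || (x <= j)).

Definition cinto (N i j : nat) : pred nat := fun x => cint N i j x && (x != j).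

Section Graphs.
Variable V : finType.

Definition is_graph_edges (E : {set {set V}}) : Prop :=
  forall e, e \in E -> #|e| = 2.

Definition underlying (G : nat -> {set {set V}}) (L : nat) : {set {set V}} :=
  \bigcup_(1 <= tau < L.+1) G tau.

Definition spanning_tree (U T : {set {set V}}) : Prop :=
  [/\ T \subset U,
      (forall x y : V, connect (fun a b => [set a; b] \in T) x y)
    & #|T| = #|V|.-1].

Definition tour_edge (v : nat -> V) (q : nat) : {set V} := [set v q; v q.+1].

Definition dfs_tour (T : {set {set V}}) (r : V) (v : nat -> V) (N : nat) : Prop :=
  [/\ v 1 = r, v N.+1 = r,
      (forall q, 1 <= q <= N -> tour_edge v q \in T)
    & (forall e, e \in T -> count (fun q => tour_edge v q == e) (iota 1 N) = 2)].

Definition deficient (T : {set {set V}}) (k : nat) (E : {set {set V}}) : bool :=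
  #|T :\: E| <= k.

Fixpoint rpos (N : nat) (e : nat -> {set V}) (H : nat -> {set {set V}})
    (i tau : nat) : nat :=
  match tau with
  | 0 => i
  | tau'.+1 => let q := rpos N e H i tau' in
               if e q \in H tau then q %% N + 1 else q
  end.

Definition visited N (e : nat -> {set V}) H (i tau : nat) : pred nat :=
  cint N i (rpos N e H i tau).
End Graphs.

Definition removable (D : nat -> pred nat) (A : pred nat) (a : nat) : Prop :=
  forall x, D a x -> exists j, A j /\ j <> a /\ D j x.

Inductive prune (D : nat -> pred nat) : pred nat -> pred nat -> Prop :=
| prune_stop (A B : pred nat) :
    (forall a, A a -> ~ removable D A a) -> (forall x, B x = A x) -> prune D A B
| prune_step (A B : pred nat) (a : nat) :
    A a -> removable D A a -> prune D (fun x => A x && (x != a)) B -> prune D A B.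

Definition roundabout_run (V : finType) (N : nat) (e : nat -> {set V})
    (H : nat -> {set {set V}}) (t : nat) (Aset : nat -> pred nat) : Prop :=
  (forall a, Aset 0 a = (1 <= a <= N)) /\
  (forall tau, 1 <= tau <= t ->
     prune (fun a => visited N e H a tau) (Aset tau.-1) (Aset tau)).

(* Epoch i (1 <= i <= rho) consists of time steps b(i-1)+1, ..., b(i);
   its repositioning part is the first Delta time steps, the rest is its
   roundabout part. *)
Definition epoch_times (b : nat -> nat) (i : nat) : seq nat :=
  iota (b i.-1).+1 (b i - b i.-1).

Definition roundabout_times (b : nat -> nat) (Delta i : nat) : seq nat :=
  iota (b i.-1 + Delta).+1 (b i - (b i.-1 + Delta)).

Definition rb_def_times (V : finType) (G : nat -> {set {set V}}) T k b Delta i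
  : seq nat := [seq tau <- roundabout_times b Delta i | deficient T k (G tau)].

Definition epoch_H (V : finType) (G : nat -> {set {set V}}) T k b Delta i
  : nat -> {set {set V}} :=
  fun tau => G (nth 0 (rb_def_times G T k b Delta i) tau.-1).

(* Main.v *)
Require Import Defs.
From HB Require Import structures.
From mathcomp Require Import all_boot zify.

Lemma cint_succ N a s x : 0 < N -> 1 <= a <= N -> 1 <= s <= N ->
  s %% N + 1 != a -> cint N a s x -> cint N a (s %% N + 1) x.
Proof.
move=> N0 ha hs.
have -> : s %% N + 1 = if s == N then 1 else s + 1.
  case: eqP => [->|ne]; first by rewrite modnn.
  by rewrite modn_small //; lia.
case: (eqVneq s N) => Es; rewrite /cint /=; move=> ne; repeat case: ifP; move=> *; lia.
Qed.

Lemma rpos_inv (V : finType) N (e : nat -> {set V}) H a tau : 0 < N -> 1 <= a <= N ->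
  exists m, m <= tau /\ rpos N e H a tau = (a - 1 + m) %% N + 1.
Proof.
move=> N0 ha; elim: tau => [|tau [m [hm E]]] /=; rewrite ?E.
  exists 0; split => //; rewrite addn0 modn_small; lia.
case: ifP => _.
  exists m.+1; split; first lia.
  by rewrite modnDml; congr (_ + 1); congr (_ %% N); lia.
by exists m; split => //; lia.
Qed.

Lemma no_return N a m : 0 < N -> 1 <= a <= N -> m.+1 < N ->
  ((a - 1 + m) %% N + 1) %% N + 1 != a.
Proof.
move=> N0 ha hm; apply/eqP => E.
have E2 : (a - 1 + m.+1) %% N = (a - 1 + 0) %% N.
  rewrite addn0 (modn_small (_ : a - 1 < N)); last lia.
  rewrite modnDml in E; have -> : a - 1 + m.+1 = a - 1 + m + 1 by lia.
  lia.
move/eqP: E2; rewrite eqn_modDl mod0n modn_small //.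
Qed.

Lemma visited_mono (V : finType) N (e : nat -> {set V}) H a tau x :
  0 < N -> 1 <= a <= N -> tau.+1 < N ->
  visited N e H a tau x -> visited N e H a tau.+1 x.
Proof.
move=> N0 ha ht; rewrite /visited.
have [m [hm E]] := @rpos_inv V N e H a tau N0 ha.
rewrite /= E; case: ifP => _ // hx.
apply: cint_succ => //.
  have := ltn_pmod (a - 1 + m) N0; lia.
apply: no_return => //; lia.
Qed.

Lemma prune_prop D A B (P : pred nat) : prune D A B ->
  (forall a, B a -> A a) /\
  ((forall x, P x -> exists a, A a /\ D a x) -> forall x, P x -> exists a, B a /\ D a x).
Proof.
elim => {A B} [A B _ E | A B a Aa rem _ [IH1 IH2]].
  split; first by move=> a; rewrite E.
  by move=> C x Px; have [a [Aa Da]] := C x Px; exists a; rewrite E.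
split; first by move=> y /IH1 /andP [].
move=> C; apply: IH2 => x Px.
have [a' [Aa' Da']] := C x Px.
case: (eqVneq a' a) => [E|ne].
  subst a'; have [j [Aj [ja Dj]]] := rem x Da'.
  by exists j; split => //; rewrite Aj; apply/eqP.
by exists a'; rewrite Aa' ne.
Qed.

Lemma run_cover (V : finType) N (e : nat -> {set V}) H t Aset :
  0 < N -> t < N -> roundabout_run N e H t Aset ->
  forall tau, tau <= t ->
  (forall a, Aset tau a -> 1 <= a <= N) /\
  (forall x, 1 <= x <= N -> exists a, Aset tau a /\ visited N e H a tau x).
Proof.
move=> N0 tN [h0 hs]; elim => [_|tau IH ht].
  split; first by move=> a; rewrite h0.
  move=> x hx; exists x; rewrite h0 hx; split => //.
  rewrite /visited /= /cint hx leqnn; lia.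
have [IH1 IH2] := IH (ltnW ht).
have hp := hs tau.+1 ltac:(lia).
have [P1 P2] := @prune_prop _ _ _ (fun x : nat => 1 <= x <= N) hp.
split; first by move=> a /P1 /IH1.
apply: P2 => x hx; have [a [Aa Da]] := IH2 x hx.
exists a; split => //; apply: visited_mono => //; [exact: IH1 | lia].
Qed.
Lemma arc_fact N a s m m' x y : 1 <= a <= N -> 1 <= m <= N -> 1 <= m' <= N ->
  m != m' -> y = (if m' == 1 then N else m'.-1) ->
  ~~ (cinto N m m' a && (a != m)) -> cint N a s y -> cinto N m m' x -> cint N a s x.
Proof.
move=> ha hm hm' ne ->; rewrite /cinto /cint /=.
case: eqP => E1; repeat case: ifP; move=> *; lia.
Qed.
Lemma nth_idx (s : seq nat) p q : sorted ltn s -> p < size s -> q < size s ->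
  nth 0 s p < nth 0 s q -> p < q.
Proof.
move=> so hp hq hlt; case: (ltngtP p q) => // h.
  have := sorted_ltn_nth ltn_trans 0 so; move=> /(_ q p hq hp h); lia.
by move: hlt; rewrite h ltnn.
Qed.

Lemma gap_fact N (ms : seq nat) j z : sorted ltn ms -> j < size ms -> z \in ms ->
  nth 0 ms j != nth 0 ms (j.+1 %% size ms) ->
  ~~ (cinto N (nth 0 ms j) (nth 0 ms (j.+1 %% size ms)) z && (z != nth 0 ms j)).
Proof.
move=> so hj hz.
set d := size ms; set jj := j.+1 %% d.
have hjj : (j.+1 < d /\ jj = j.+1) \/ (j.+1 = d /\ jj = 0).
  case: (ltngtP j.+1 d) => h; [left|lia|right].
    by split => //; rewrite /jj modn_small.
  by split => //; rewrite /jj h modnn.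
have hjjd : jj < d by case: hjj; lia.
have hk : index z ms < d by rewrite index_mem.
have Ez : nth 0 ms (index z ms) = z by rewrite nth_index.
set k := index z ms in hk Ez.
have f1 := @nth_idx ms j k so hj hk; rewrite Ez in f1.
have f2 := @nth_idx ms k jj so hk hjjd; rewrite Ez in f2.
have f3 := @nth_idx ms j jj so hj hjjd.
have f4 := @nth_idx ms jj j so hjjd hj.
have f5 := @nth_idx ms k j so hk hj; rewrite Ez in f5.
have f6 := @nth_idx ms jj k so hjjd hk; rewrite Ez in f6.
move: f1 f2 f3 f4 f5 f6.
set m := nth 0 ms j; set m' := nth 0 ms jj.
move=> f1 f2 f3 f4 f5 f6 ne; rewrite /cinto /cint /=.
repeat case: ifP; move=> *; lia.
Qed.
Theorem lemma11 (V : finType) (n k Delta L : nat) (G : nat -> {set {set V}})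
    (T : {set {set V}}) (r : V) (v : nat -> V) (rho : nat) (b : nat -> nat)
    (A : nat -> nat -> pred nat) :
  n = #|V| -> 2 <= n -> 1 <= k ->
  (forall tau, 1 <= tau <= L -> is_graph_edges (G tau)) ->
  spanning_tree (underlying G L) T ->
  let N := 2 * (n - 1) in
  let t := N %/ (2 * k) in
  dfs_tour T r v N ->
  is_rho k rho ->
  b 0 = 0 ->
  (forall i, 1 <= i <= rho -> b i.-1 <= b i) ->
  b rho <= L ->
  (forall i, 1 <= i <= rho ->
     Delta + t <= count (fun tau => deficient T k (G tau)) (epoch_times b i)) ->
  (forall i, 1 <= i <= rho -> t <= size (rb_def_times G T k b Delta i)) ->
  (forall i, 1 <= i <= rho ->
     roundabout_run N (tour_edge v) (epoch_H G T k b Delta i) t (A i)) ->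
  let ms := [seq x <- iota 1 N | has (fun i => A i t x) (iota 1 rho)] in
  let d := size ms in
  forall i, 1 <= i <= rho ->
  forall j, j < d ->
  exists a, A i t a /\
    (forall x, cinto N (nth 0 ms j) (nth 0 ms (j.+1 %% d)) x ->
       visited N (tour_edge v) (epoch_H G T k b Delta i) a t x).
Proof.
move=> hn hn2 hk _ _ N t _ _ _ _ _ _ _ hrun ms d i hi j hj.
have N0 : 0 < N by rewrite /N; lia.
have tdef : t * (2 * k) <= N := leq_divM N (2 * k).
have tN : t < N.
  case: (posnP t) => [->//|tp]. clearbody t N. nia.
have [C1 C2] := @run_cover V _ _ _ _ _ N0 tN (hrun i hi) t (leqnn t).
have so : sorted ltn ms := sorted_filter ltn_trans _ (iota_ltn_sorted 1 N).
have ms_mem : forall a, A i t a -> a \in ms.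
  move=> a Aa; rewrite mem_filter mem_iota; apply/andP; split.
    by apply/hasP; exists i => //; rewrite mem_iota; lia.
  have := C1 a Aa; lia.
have ms_bnd : forall z, z \in ms -> 1 <= z <= N.
  by move=> z; rewrite mem_filter mem_iota => /andP [_ h]; lia.
have d0 : 0 < d by lia.
have hm := ms_bnd _ (mem_nth 0 hj).
have hm' := ms_bnd _ (mem_nth 0 (ltn_pmod j.+1 d0)).
case: (eqVneq (nth 0 ms j) (nth 0 ms (j.+1 %% d))) => E.
  have [a [Aa _]] := C2 1 ltac:(lia).
  exists a; split => // x; rewrite /cinto /cint E /=.
  repeat case: ifP; move=> *; lia.
set y := if nth 0 ms (j.+1 %% d) == 1 then N else (nth 0 ms (j.+1 %% d)).-1.
have hy : 1 <= y <= N.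
  rewrite /y; move: hm'; clear; move: (nth 0 ms _) => z; case: eqP => h; lia.
have [a [Aa Va]] := C2 y hy.
exists a; split => // x hx.
apply: (@arc_fact N a (rpos N (tour_edge v) (epoch_H G T k b Delta i) a t) _ _ x y (C1 a Aa) hm hm' E erefl _ Va hx).
exact: gap_fact so hj (ms_mem a Aa) E.
Qed.
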